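(* Let $\Gamma$ be a first-order expansion of $(\mathbb{Z};\mathrm{suc})$. If $\Gamma$ primitive positively defines a relation that is not Horn-definable over $(\mathbb{Z};\mathrm{suc})$, then $\Gamma$ also primitive positively defines a binary relation that is not Horn-definable over $(\mathbb{Z};\mathrm{suc})$.
   Context: $\mathrm{suc}^p=\{(x,y)\in\mathbb{Z}^2:y=x+p\}$ for $p\in\mathbb{Z}$, $\mathrm{suc}=\mathrm{suc}^1$. A first-order expansion of $(\mathbb{Z};\mathrm{suc})$ is a relational structure with domain $\mathbb{Z}$ whose relations are first-order definable in $(\mathbb{Z};\mathrm{suc})$ and in which $\mathrm{suc}$ is primitive positive definable. A relation is Horn-definable over $(\mathbb{Z};\mathrm{suc})$ if it is defined in $(\mathbb{Z};\mathrm{suc})$ by a quantifier-free formula in conjunctive normal form whose literals are of the form $\mathrm{suc}^p(x,y)$ or $\neg\mathrm{suc}^p(x,y)$ and in which each clause contains at most one positive (unnegated) literal. *)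

(* Defs.v *)
From mathcomp Require Import all_boot.
From Stdlib Require Import ZArith.
Set Implicit Arguments. Unset Strict Implicit. Unset Printing Implicit Defensive.

Definition relation (n : nat) := ('I_n -> Z) -> Prop.

Definition sucp (p x y : Z) : Prop := y = (x + p)%Z.

Inductive fo : Type :=
| FSuc : nat -> nat -> fo
| FEq  : nat -> nat -> fo
| FNot : fo -> fo
| FAnd : fo -> fo -> fo
| FEx  : nat -> fo -> fo.

Definition upd (v : nat -> Z) (i : nat) (z : Z) : nat -> Z :=
  fun k => if k == i then z else v k.

Fixpoint fo_sat (v : nat -> Z) (f : fo) : Prop :=
  match f with
  | FSuc i j => sucp 1 (v i) (v j)
  | FEq i j => v i = v j
  | FNot g => ~ fo_sat v g
  | FAnd g h => fo_sat v g /\ fo_sat v h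
  | FEx i g => exists z : Z, fo_sat (upd v i z) g
  end.

(* R (arity n) is defined by f: the tuple (v 0, ..., v (n-1)) is in R iff v satisfies f,
   for every valuation v (so f may only depend on x_0..x_{n-1}). *)
Definition fo_definable (n : nat) (R : relation n) : Prop :=
  exists f : fo, forall v : nat -> Z, R (fun k : 'I_n => v (nat_of_ord k)) <-> fo_sat v f.

Record structure := {
  sym : Type;
  ar : sym -> nat;
  interp : forall s : sym, relation (ar s)
}.

Inductive pp (G : structure) : Type :=
| PTrue : pp G
| PEq : nat -> nat -> pp G
| PAtom : forall s : sym G, ('I_(ar s) -> nat) -> pp G
| PAnd : pp G -> pp G -> pp G
| PEx : nat -> pp G -> pp G.

Fixpoint pp_sat (G : structure) (v : nat -> Z) (f : pp G) : Prop :=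
  match f with
  | PTrue => True
  | PEq i j => v i = v j
  | PAtom s a => @interp G s (fun k => v (a k))
  | PAnd g h => pp_sat v g /\ pp_sat v h
  | PEx i g => exists z : Z, pp_sat (upd v i z) g
  end.

Definition pp_definable (G : structure) (n : nat) (R : relation n) : Prop :=
  exists f : pp G, forall v : nat -> Z, R (fun k : 'I_n => v (nat_of_ord k)) <-> pp_sat v f.

Definition suc_rel : relation 2 :=
  fun t => sucp 1 (t ord0) (t (@Ordinal 2 1 isT)).

Definition fo_expansion (G : structure) : Prop :=
  (forall s : sym G, fo_definable (@interp G s)) /\ pp_definable G suc_rel.

Record literal := Lit { positive : bool; lp : Z; li : nat; lj : nat }.
Definition clause := list literal.
Definition cnf := list clause.

Definition lit_sat (v : nat -> Z) (l : literal) : Prop :=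
  if positive l then sucp (lp l) (v (li l)) (v (lj l))
  else ~ sucp (lp l) (v (li l)) (v (lj l)).

Definition clause_sat (v : nat -> Z) (c : clause) : Prop :=
  exists2 l, List.In l c & lit_sat v l.

Definition cnf_sat (v : nat -> Z) (F : cnf) : Prop :=
  forall c, List.In c F -> clause_sat v c.

Definition horn_cnf (F : cnf) : Prop :=
  forall c, List.In c F -> (count positive c <= 1)%nat.

Definition horn_definable (n : nat) (R : relation n) : Prop :=
  exists F : cnf, horn_cnf F /\
    forall v : nat -> Z, R (fun k : 'I_n => v (nat_of_ord k)) <-> cnf_sat v F.

(* Main.v *)
Require Import Defs.
From mathcomp Require Import all_boot.
From Stdlib Require Import ZArith.
From mathcomp Require Import zify.
From Stdlib Require Import Lia Classical FunctionalExtensionality List.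
Local Open Scope Z_scope.
Notation lpos := Defs.positive.
Notation seq := seq.seq.




Definition val_t := nat -> Z.

Definition sim (M : Z) (S : seq nat) (v w : val_t) : Prop :=
  forall i j, i \in S -> j \in S -> forall p, Z.abs p <= M ->
    (v j - v i = p <-> w j - w i = p).

Definition Supp (P : val_t -> Prop) (S : seq nat) : Prop :=
  forall v w, (forall x, x \in S -> v x = w x) -> (P v <-> P w).

Definition Det (P : val_t -> Prop) (S : seq nat) (M : Z) : Prop :=
  forall v w, sim M S v w -> (P v <-> P w).

Definition comb (a b : val_t) (N : Z) : val_t := fun x => a x + N * (b x - a x).

Definition Cl (P : val_t -> Prop) : Prop :=
  forall a b, P a -> P b -> forall N0 : Z, exists N, N0 <= N /\ P (comb a b N).

Definition sab (v : val_t) (S : seq nat) : Z := foldr (fun x acc => Z.abs (v x) + acc) 0 S.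

Lemma sab_ge v S x : x \in S -> Z.abs (v x) <= sab v S.
Proof.
elim: S => [|y S IH] //= ; rewrite inE => /orP [/eqP ->|H].
- have : 0 <= sab v S by (elim: S {IH} => //= z S' IH'; lia). lia.
- have := IH H. lia.
Qed.

Lemma sab_ge0 v S : 0 <= sab v S.
Proof. elim: S => //= z S' IH'; lia. Qed.

Lemma sim_sym M S v w : sim M S v w -> sim M S w v.
Proof. move=> H i j Hi Hj p Hp; split => ?; apply (H i j Hi Hj p Hp); auto. Qed.

Lemma sim_mono M M' S S' v w : sim M S v w -> M' <= M -> {subset S' <= S} -> sim M' S' v w.
Proof. move=> H HM Hs i j Hi Hj p Hp; apply: H; auto; lia. Qed.

Lemma upd_eq v i z : upd v i z i = z.
Proof. by rewrite /upd eqxx. Qed.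
Lemma upd_neq v i z k : k <> i -> upd v i z k = v k.
Proof. move=> H; rewrite /upd; case: eqP => //. Qed.

Lemma gap d d' N : d <> d' -> 0 <= N -> N - Z.abs d <= Z.abs (d + N * (d' - d)).
Proof. move=> H HN. have : d' - d >= 1 \/ d' - d <= -1 by lia. case=> H1; nia. Qed.

Lemma ex_step (Phi : val_t -> Prop) M S x :
  (forall v w, sim M S v w -> (Phi v <-> Phi w)) ->
  forall v w, sim (2*M) S v w -> (exists z, Phi (upd v x z)) -> (exists z, Phi (upd w x z)).
Proof.
move=> HPhi v w Hs [z Hz].
destruct (classic (exists i0, i0 \in S /\ i0 <> x /\ Z.abs (z - v i0) <= M)) as [[i0 [Hi0 [Hix Hnear]]]|Hfar].
- exists (w i0 + (z - v i0)). apply/(HPhi (upd v x z)) => //.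
  move=> i j Hi Hj p Hp.
  case: (eqVneq i x) => [->|Hix'].
  + case: (eqVneq j x) => [->|Hjx].
    * rewrite !upd_eq; lia.
    * rewrite !upd_eq !upd_neq; try (apply/eqP; done).
      have HH := Hs i0 j Hi0 Hj (p + (z - v i0)).
      split => H1.
      -- have HH3 := (proj1 (HH ltac:(lia)) ltac:(lia)). lia.
      -- have HH3 := (proj2 (HH ltac:(lia)) ltac:(lia)). lia.
  + case: (eqVneq j x) => [->|Hjx].
    * rewrite !upd_eq !upd_neq; try (apply/eqP; done).
      have := Hs i i0 Hi Hi0 (p - (z - v i0)). move=> HH2.
      split => H1.
      -- have HH3 := (proj1 (HH2 ltac:(lia)) ltac:(lia)). lia.
      -- have HH3 := (proj2 (HH2 ltac:(lia)) ltac:(lia)). lia.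
    * rewrite !upd_neq; try (apply/eqP; done). apply: Hs => //; lia.
- set z' := M + 1 + sab w S.
  exists z'. apply/(HPhi (upd v x z)) => //.
  have Hf : forall i, i \in S -> i <> x -> M < Z.abs (z - v i).
  { move=> i Hi Hix. destruct (Z_lt_le_dec M (Z.abs (z - v i))) as [h|h] => //. exfalso; apply: Hfar. exists i; auto. }
  have Hf' : forall i, i \in S -> M < Z.abs (z' - w i).
  { move=> i Hi. have := @sab_ge w S i Hi. have := @sab_ge0 w S. rewrite /z'. lia. }
  move=> i j Hi Hj p Hp.
  case: (eqVneq i x) => [->|Hix'].
  + case: (eqVneq j x) => [->|Hjx].
    * rewrite !upd_eq; lia.
    * rewrite !upd_eq !upd_neq; try (apply/eqP; done).
      have := Hf j Hj (elimN eqP Hjx). have := Hf' j Hj. lia.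
  + case: (eqVneq j x) => [->|Hjx].
    * rewrite !upd_eq !upd_neq; try (apply/eqP; done).
      have := Hf i Hi (elimN eqP Hix'). have := Hf' i Hi. lia.
    * rewrite !upd_neq; try (apply/eqP; done). apply: Hs => //; lia.
Qed.
Arguments sim_mono {M M' S S' v w}.
Arguments sim_sym {M S v w}.
Arguments ex_step {Phi M S} x _ {v w}.
Arguments sab_ge {v S x}.


Lemma ef_fo f : exists M S, forall v w, sim M S v w -> (fo_sat v f <-> fo_sat w f).
Proof.
elim: f.
- move=> i j; exists 1, [:: i; j] => v w Hs /=; rewrite /sucp.
  have := Hs i j ltac:(by rewrite !inE eqxx) ltac:(by rewrite !inE eqxx orbT) 1 ltac:(lia). lia.
- move=> i j; exists 0, [:: i; j] => v w Hs /=.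
  have := Hs i j ltac:(by rewrite !inE eqxx) ltac:(by rewrite !inE eqxx orbT) 0 ltac:(lia). lia.
- move=> g [M [S H]]; exists M, S => v w Hs /=. have := H v w Hs. tauto.
- move=> g [M1 [S1 H1]] h [M2 [S2 H2]]; exists (Z.max M1 M2), (S1 ++ S2) => v w Hs /=.
  have s1 : {subset S1 <= S1 ++ S2} by move=> x Hx; rewrite mem_cat Hx.
  have s2 : {subset S2 <= S1 ++ S2} by move=> x Hx; rewrite mem_cat Hx orbT.
  have := H1 v w (sim_mono (M':=M1) Hs ltac:(lia) s1).
  have := H2 v w (sim_mono (M':=M2) Hs ltac:(lia) s2).
  tauto.
- move=> x g [M [S H]]; exists (2*M), S => v w Hs /=; split.
  + apply: (ex_step x H Hs).
  + apply: (ex_step x H (sim_sym Hs)).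
Qed.

Lemma ext_det (P : val_t -> Prop) M S' S :
  (forall v w, sim M S' v w -> (P v <-> P w)) -> Supp P S -> Det P S M.
Proof.
move=> H HS v w Hs.
set B := Z.abs M + 1 + sab v S + sab w S.
set far := fun x : nat => B * (Z.of_nat x + 1).
set v' := fun x => if x \in S then v x else far x.
set w' := fun x => if x \in S then w x else far x.
have HB : Z.abs M + 1 + sab v S + sab w S <= B by rewrite /B; lia.
have h0 := @sab_ge0 v S. have h1 := @sab_ge0 w S.
have Hfar : forall x, B <= far x.
{ move=> x; rewrite /far; nia. }
have -> : P v <-> P v' by apply: HS => x Hx; rewrite /v' Hx.
have -> : P w <-> P w' by apply: HS => x Hx; rewrite /w' Hx.
apply: H => i j Hi Hj p Hp; rewrite /v' /w'.
case Hi': (i \in S); case Hj': (j \in S).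
- by apply: Hs.
- have := @sab_ge v S i Hi'. have := @sab_ge w S i Hi'. have := Hfar j. lia.
- have := @sab_ge v S j Hj'. have := @sab_ge w S j Hj'. have := Hfar i. lia.
- lia.
Qed.

Arguments ext_det {P M S' S}.

Lemma atom_det (G : structure) (s : sym G) : fo_definable (@interp G s) ->
  exists M, forall (a : 'I_(ar s) -> nat) v w,
    sim M [seq a k | k <- enum 'I_(ar s)] v w ->
    (@interp G s (fun k => v (a k)) <-> @interp G s (fun k => w (a k))).
Proof.
move=> [f Hf]. have [M0 [S0 H0]] := ef_fo f.
set Q := fun V : val_t => @interp G s (fun k : 'I_(ar s) => V (nat_of_ord k)).
have HQ : forall v w, sim M0 S0 v w -> (Q v <-> Q w).
{ move=> v w Hs; rewrite /Q Hf Hf; exact: H0. }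
have HS : Supp Q (iota 0 (ar s)).
{ move=> v w H; rewrite /Q.
  have -> : (fun k : 'I_(ar s) => v (nat_of_ord k)) = (fun k => w (nat_of_ord k)); last by [].
  apply: functional_extensionality => k; apply: H; rewrite mem_iota /=; exact: ltn_ord. }
have HD := ext_det HQ HS.
exists M0 => a v w Hs.
set at_ := fun x : nat => match (insub x : option 'I_(ar s)) with Some o => a o | None => 0%nat end.
have Hat : forall k : 'I_(ar s), at_ (nat_of_ord k) = a k.
{ move=> k; rewrite /at_ (valK k) //. }
have E : forall u : val_t, (fun k : 'I_(ar s) => u (a k)) = (fun k => (fun x => u (at_ x)) (nat_of_ord k)).
{ move=> u; apply: functional_extensionality => k /=; by rewrite Hat. }
rewrite (E v) (E w). apply: (HD (fun x => v (at_ x)) (fun x => w (at_ x))).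
move=> i j Hi Hj p Hp.
have Hm : forall x, x \in iota 0 (ar s) -> at_ x \in [seq a k | k <- enum 'I_(ar s)].
{ move=> x; rewrite mem_iota /= => Hx.
  have -> : x = nat_of_ord (Ordinal Hx) by []. rewrite Hat. apply: map_f. by rewrite mem_enum. }
exact: Hs (Hm _ Hi) (Hm _ Hj) p Hp.
Qed.

Lemma ef_pp (G : structure) : (forall s : sym G, fo_definable (@interp G s)) ->
  forall f : pp G, exists M S, forall v w, sim M S v w -> (pp_sat v f <-> pp_sat w f).
Proof.
move=> Hfo; elim.
- exists 0, [::] => v w _ /=; tauto.
- move=> i j; exists 0, [:: i; j] => v w Hs /=.
  have := Hs i j ltac:(by rewrite !inE eqxx) ltac:(by rewrite !inE eqxx orbT) 0 ltac:(lia). lia.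
- move=> s a. have [M HM] := @atom_det G s (Hfo s). exists M, [seq a k | k <- enum 'I_(ar s)] => v w Hs /=.
  exact: HM.
- move=> g [M1 [S1 H1]] h [M2 [S2 H2]]; exists (Z.max M1 M2), (S1 ++ S2) => v w Hs /=.
  have s1 : {subset S1 <= S1 ++ S2} by move=> x Hx; rewrite mem_cat Hx.
  have s2 : {subset S2 <= S1 ++ S2} by move=> x Hx; rewrite mem_cat Hx orbT.
  have := H1 v w (sim_mono (M':=M1) Hs ltac:(lia) s1).
  have := H2 v w (sim_mono (M':=M2) Hs ltac:(lia) s2).
  tauto.
- move=> x g [M [S H]]; exists (2*M), S => v w Hs /=; split.
  + apply: (ex_step x H Hs).
  + apply: (ex_step x H (sim_sym Hs)).
Qed.

Definition PPdef (G : structure) (P : val_t -> Prop) : Prop :=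
  exists f : pp G, forall v, P v <-> pp_sat v f.

Lemma det_of_pp (G : structure) (P : val_t -> Prop) S :
  (forall s : sym G, fo_definable (@interp G s)) -> PPdef G P -> Supp P S ->
  exists M, 0 <= M /\ Det P S M.
Proof.
move=> Hfo [f Hf] HS. have [M [S' H]] := @ef_pp G Hfo f.
have HD : Det P S M.
{ apply: (ext_det (S':=S')) HS => v w Hs; rewrite !Hf; exact: H. }
exists (Z.abs M); split; first lia.
move=> v w Hs; apply: HD. apply: (sim_mono Hs); [lia | by []].
Qed.


Section PP.
Variable G : structure.

Lemma pp_ext (P Q : val_t -> Prop) : (forall v, P v <-> Q v) -> PPdef G P -> PPdef G Q.
Proof. move=> H [f Hf]; exists f => v; rewrite -H; exact: Hf. Qed.

Lemma pp_and (P Q : val_t -> Prop) : PPdef G P -> PPdef G Q -> PPdef G (fun v => P v /\ Q v).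
Proof. move=> [f Hf] [g Hg]; exists (PAnd f g) => v /=; rewrite Hf Hg; tauto. Qed.

Lemma pp_ex (P : val_t -> Prop) x : PPdef G P -> PPdef G (fun v => exists z, P (upd v x z)).
Proof.
move=> [f Hf]; exists (PEx x f) => v /=; split; move=> [z Hz]; exists z; by apply/Hf.
Qed.

Lemma pp_eq i j : PPdef G (fun v => v i = v j).
Proof. exists (PEq G i j) => v //=. Qed.

Definition ren (a b : nat) (x y : Z) : val_t :=
  fun k => if k == a then x else if k == b then y else 0.

Lemma upd_ne v i z k : (k == i) = false -> upd v i z k = v k.
Proof. by rewrite /upd => ->. Qed.

Lemma pp_rename2 (P : val_t -> Prop) (a b : nat) : PPdef G P ->
  (forall v w, v a = w a -> v b = w b -> (P v <-> P w)) -> a <> b ->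
  forall i j, PPdef G (fun v => P (ren a b (v i) (v j))).
Proof.
move=> HP HS Hab i j.
set F1 := (a + b + i + j + 1)%nat. set F2 := F1.+1.
have h1 : (F1 == F2) = false by apply/eqP; rewrite /F2; lia.
have h2 : (F2 == F1) = false by apply/eqP; rewrite /F2; lia.
have h3 : (i == F1) = false by apply/eqP; rewrite /F1; lia.
have h4 : (i == F2) = false by apply/eqP; rewrite /F2 /F1; lia.
have h5 : (j == F1) = false by apply/eqP; rewrite /F1; lia.
have h6 : (j == F2) = false by apply/eqP; rewrite /F2 /F1; lia.
have h7 : (F1 == a) = false by apply/eqP; rewrite /F1; lia.
have h8 : (F1 == b) = false by apply/eqP; rewrite /F1; lia.
have h9 : (F2 == a) = false by apply/eqP; rewrite /F2 /F1; lia.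
have h10 : (F2 == b) = false by apply/eqP; rewrite /F2 /F1; lia.
have h11 : (a == b) = false by apply/eqP.
pose Q4 := fun w2 : val_t => w2 a = w2 F1 /\ (w2 b = w2 F2 /\ P w2).
pose Q3 := fun w1 : val_t => exists y2, Q4 (upd w1 b y2).
pose Q2 := fun v2 : val_t => v2 F1 = v2 i /\ (v2 F2 = v2 j /\ exists y1, Q3 (upd v2 a y1)).
pose Q1 := fun v1 : val_t => exists z2, Q2 (upd v1 F2 z2).
pose Q0 := fun v : val_t => exists z1, Q1 (upd v F1 z1).
have HQ4 : PPdef G Q4 by apply: pp_and; [exact: pp_eq| apply: pp_and; [exact: pp_eq|exact: HP]].
have HQ3 : PPdef G Q3 by apply: pp_ex.
have HQ2 : PPdef G Q2 by apply: pp_and; [exact: pp_eq| apply: pp_and; [exact: pp_eq|exact: pp_ex]].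
have HQ1 : PPdef G Q1 by apply: pp_ex.
have HQ0 : PPdef G Q0 by apply: pp_ex.
apply: (pp_ext Q0) => //.
- move=> v /=. rewrite /Q0 /Q1 /Q2 /Q3 /Q4 /upd ?eqxx ?h1 ?h2 ?h3 ?h4 ?h5 ?h6 ?h7 ?h8 ?h9 ?h10 ?h11 /=. split.
  + move=> [z1 [z2 [E1 [E2 [y1 [y2 [E3 [E4 HP2]]]]]]]].
    move: HP2; apply: (fun E1 E2 => proj1 (HS _ _ E1 E2)); rewrite /ren ?eqxx ?h11 /= ?E3 ?E4 //. by rewrite eq_sym h11.
  + move=> H. exists (v i), (v j); split => //; split => //.
    exists (v i), (v j); split => //; split => //.
    move: H; apply: (fun E1 E2 => proj1 (HS _ _ E1 E2)); rewrite /ren ?eqxx ?h11 //=. by rewrite eq_sym h11.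
Qed.
End PP.

Section PP2.
Variable G : structure.
Hypothesis Hsuc : pp_definable G suc_rel.

Lemma pp_suc i j : PPdef G (fun v => v j = v i + 1).
Proof.
have H0 : PPdef G (fun v => v 1%nat = v 0%nat + 1).
{ have [f Hf] := Hsuc. exists f => v. rewrite -Hf. by []. }
have := @pp_rename2 G _ 0%nat 1%nat H0 ltac:(move=> v w E0 E1 /=; rewrite E0 E1 //) ltac:(by []) i j.
apply: pp_ext => v. by rewrite /ren /=.
Qed.

Lemma pp_shift_nat (n : nat) i j : PPdef G (fun v => v j = v i + Z.of_nat n).
Proof.
elim: n i j => [|n IH] i j.
- apply: (@pp_ext G (fun v => v j = v i)); last exact: pp_eq. move=> v; lia.
- set F := (i + j + 1)%nat.
  have h1 : (i == F) = false by apply/eqP; rewrite /F; lia.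
  have h2 : (j == F) = false by apply/eqP; rewrite /F; lia.
  pose Q := fun w : val_t => w F = w i + Z.of_nat n /\ w j = w F + 1.
  have HQ : PPdef G Q by apply: pp_and; [exact: IH| exact: pp_suc].
  apply: (@pp_ext G (fun v => exists z, Q (upd v F z))); last exact: pp_ex.
  move=> v; rewrite /Q /upd eqxx h1 h2; split.
  + move=> [z [E1 E2]]; lia.
  + move=> E; exists (v i + Z.of_nat n); lia.
Qed.

Lemma pp_shift i j d : PPdef G (fun v => v j = v i + d).
Proof.
case: (Z_le_dec 0 d) => Hd.
- apply: (@pp_ext G (fun v => v j = v i + Z.of_nat (Z.to_nat d))); last exact: pp_shift_nat.
  move=> v; rewrite Z2Nat.id //.
- apply: (@pp_ext G (fun v => v i = v j + Z.of_nat (Z.to_nat (- d)))); last exact: pp_shift_nat.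
  move=> v; rewrite Z2Nat.id; lia.
Qed.

Lemma pp_restr (P : val_t -> Prop) i j d : PPdef G P -> i <> j ->
  PPdef G (fun v => P (upd v j (v i + d))).
Proof.
move=> HP Hij.
have h1 : (i == j) = false by apply/eqP.
pose Q := fun w : val_t => w j = w i + d /\ P w.
have HQ : PPdef G Q by apply: pp_and; [exact: pp_shift| exact: HP].
apply: (@pp_ext G (fun v => exists z, Q (upd v j z))); last exact: pp_ex.
move=> v; rewrite /Q; split.
- move=> [z [E1 E2]]. move: E1; rewrite /upd eqxx h1 => E1. by rewrite -E1.
- move=> H; exists (v i + d); split => //. by rewrite /upd eqxx h1.
Qed.
End PP2.


Lemma inter (u y : val_t) N i j p : 0 <= N -> Z.abs p + Z.abs (u j - u i) < N ->
  (comb u y N j = comb u y N i + p <-> (u j = u i + p /\ y j = y i + p)).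
Proof.
move=> HN Hlt; rewrite /comb.
case: (Z.eq_dec (y j - y i) (u j - u i)) => Hd.
- split; [move=> H; nia | move=> [H1 H2]; nia].
- have := gap (u j - u i) (y j - y i) N ltac:(lia) HN.
  have -> : u j - u i + N * (y j - y i - (u j - u i)) = (u j + N * (y j - u j)) - (u i + N * (y i - u i)) by ring.
  move=> Hg. split; [move=> H; exfalso; lia | move=> [H1 H2]; exfalso; lia].
Qed.

Definition latom (v : val_t) (l : literal) : Prop := v (lj l) = v (li l) + lp l.

Lemma lit_satE v l : lit_sat v l <-> (if lpos l then latom v l else ~ latom v l).
Proof. rewrite /lit_sat /sucp /latom. by case: (lpos l). Qed.

Lemma lit_inter v w l : exists N0, forall N, N0 <= N ->
  (latom (comb v w N) l <-> latom v l /\ latom w l).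
Proof.
exists (Z.abs (lp l) + Z.abs (v (lj l) - v (li l)) + 1) => N HN.
apply: inter; lia.
Qed.

Lemma clause_inter v w (c : clause) : exists N0, forall N, N0 <= N ->
  forall l, List.In l c -> (latom (comb v w N) l <-> latom v l /\ latom w l).
Proof.
elim: c => [|l c [N1 H1]].
- by exists 0 => N _ l [].
- have [N2 H2] := lit_inter v w l.
  exists (Z.max N1 N2) => N HN l' [<-|Hl'].
  + apply: H2; lia.
  + apply: H1 => //; lia.
Qed.

Lemma count_pos_in (c : clause) l : List.In l c -> lpos l -> (0 < count lpos c)%nat.
Proof.
elim: c => [|x c IH] //= [->|H] Hp.
- by rewrite Hp.
- have := IH H Hp. lia.
Qed.

Arguments count_pos_in {c l}.

Lemma two_pos (c : clause) l1 l2 : List.In l1 c -> List.In l2 c -> lpos l1 -> lpos l2 ->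
  (count lpos c <= 1)%nat -> l1 = l2.
Proof.
elim: c => [|x c IH] //= H1 H2 P1 P2 Hc.
case: H1 => [E1|H1]; case: H2 => [E2|H2].
- by rewrite -E1 -E2.
- subst x. rewrite P1 in Hc. have := count_pos_in H2 P2. lia.
- subst x. rewrite P2 in Hc. have := count_pos_in H1 P1. lia.
- apply: IH => //. case: (lpos x) Hc => /=; lia.
Qed.

Arguments two_pos {c l1 l2}.
Arguments clause_inter v w c : clear implicits.

Lemma clause_comb v w (c : clause) : (count lpos c <= 1)%nat ->
  clause_sat v c -> clause_sat w c -> exists N0, forall N, N0 <= N -> clause_sat (comb v w N) c.
Proof.
move=> Hh [l1 Hl1 S1] [l2 Hl2 S2].
have [N0 HN] := clause_inter v w c.
exists N0 => N HNN.
destruct (classic (clause_sat (comb v w N) c)) as [H|H] => //.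
exfalso.
have Hall : forall l, List.In l c -> ~ lit_sat (comb v w N) l.
{ move=> l Hl Hs; apply: H; by exists l. }
have Hneg : forall l, List.In l c -> lpos l = false -> latom v l /\ latom w l.
{ move=> l Hl Hp. have := Hall l Hl. rewrite lit_satE Hp => Hn.
  apply/(HN N HNN l Hl). tauto. }
move: S1 S2; rewrite !lit_satE.
case P1: (lpos l1); case P2: (lpos l2) => S1 S2.
- have E := two_pos Hl1 Hl2 P1 P2 Hh. subst l2.
  apply: (Hall l1 Hl1). rewrite lit_satE P1. apply/(HN N HNN l1 Hl1). tauto.
- have := Hneg l2 Hl2 P2. tauto.
- have := Hneg l1 Hl1 P1. tauto.
- have := Hneg l1 Hl1 P1. tauto.
Qed.

Arguments clause_comb {v w c}.

Lemma cnf_comb F : horn_cnf F -> forall v w, cnf_sat v F -> cnf_sat w F ->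
  exists N0, forall N, N0 <= N -> cnf_sat (comb v w N) F.
Proof.
move=> Hh v w Hv Hw.
elim: F Hh Hv Hw => [|c F IH] Hh Hv Hw.
- by exists 0 => N _ c [].
- have [N1 H1] := IH (fun c' Hc' => Hh c' (or_intror Hc')) (fun c' Hc' => Hv c' (or_intror Hc'))
     (fun c' Hc' => Hw c' (or_intror Hc')).
  have [N2 H2] := clause_comb (Hh c (or_introl erefl)) (Hv c (or_introl erefl)) (Hw c (or_introl erefl)).
  exists (Z.max N1 N2) => N HN c' [<-|Hc'].
  + apply: H2; lia.
  + apply: H1 => //; lia.
Qed.


Definition atom := (nat * nat * Z)%type.
Definition holds (v : val_t) (a : atom) : Prop := let '(i, j, p) := a in v j = v i + p.
Definition holdsb (v : val_t) (a : atom) : bool := let '(i, j, p) := a in Z.eqb (v j) (v i + p).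
Lemma holdsbP v a : holdsb v a = true <-> holds v a.
Proof. case: a => [[i j] p] /=. exact: Z.eqb_eq. Qed.

Lemma In_mem (s : list nat) x : List.In x s <-> x \in s.
Proof.
elim: s => [|y s IH] //=. rewrite inE; split.
- case=> [->|H]; first by rewrite eqxx. by rewrite (proj1 IH H) orbT.
- case/orP => [/eqP->|H]; [by left| right; exact/IH].
Qed.

Definition zrange (M : Z) : list Z := List.map (fun k => Z.of_nat k - M) (List.seq 0 (Z.to_nat (2*M+1))).
Lemma zrange_in M p : 0 <= M -> Z.abs p <= M -> List.In p (zrange M).
Proof.
move=> HM Hp. rewrite /zrange in_map_iff. exists (Z.to_nat (p + M)). split; first lia.
rewrite in_seq. lia.
Qed.
Lemma zrange_bound M p : List.In p (zrange M) -> Z.abs p <= M.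
Proof. rewrite /zrange in_map_iff => [[k [<- Hk]]]. move: Hk; rewrite in_seq. lia. Qed.

Definition atomsL (n : nat) (M : Z) : list atom :=
  flat_map (fun i => flat_map (fun j => List.map (fun p => (i, j, p)) (zrange M)) (iota 0 n)) (iota 0 n).

Lemma atomsL_in n M i j p : 0 <= M -> i \in iota 0 n -> j \in iota 0 n -> Z.abs p <= M ->
  List.In (i, j, p) (atomsL n M).
Proof.
move=> HM Hi Hj Hp. rewrite /atomsL in_flat_map. exists i; split; first exact/In_mem.
rewrite in_flat_map. exists j; split; first exact/In_mem.
rewrite in_map_iff. exists p; split => //. exact: zrange_in.
Qed.

Arguments atomsL_in {n M i j p}.

Lemma atomsL_inv n M i j p : List.In (i, j, p) (atomsL n M) ->
  i \in iota 0 n /\ j \in iota 0 n /\ Z.abs p <= M.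
Proof.
rewrite /atomsL in_flat_map => [[i' [Hi' H]]]. move: H; rewrite in_flat_map => [[j' [Hj' H]]].
move: H; rewrite in_map_iff => [[p' [E Hp']]]. case: E => <- <- <-.
split; first exact/In_mem. split; first exact/In_mem. exact: zrange_bound.
Qed.

Arguments atomsL_inv {n M i j p}.

Fixpoint subl (s : list atom) : list (list atom) :=
  match s with
  | nil => [:: nil]
  | x :: s' => List.map (cons x) (subl s') ++ subl s'
  end.

Lemma filter_subl f s : List.In (List.filter f s) (subl s).
Proof.
elim: s => [|x s IH] /=; first by left.
case: (f x); apply in_or_app; [left; exact: in_map | right; exact: IH].
Qed.

Definition mkl (b : bool) (a : atom) : literal := let '(i, j, p) := a in Lit b p i j.
Lemma mkl_true v a : lit_sat v (mkl true a) <-> holds v a.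
Proof. case: a => [[i j] p] /=. by rewrite /lit_sat /sucp. Qed.
Lemma mkl_false v a : lit_sat v (mkl false a) <-> ~ holds v a.
Proof. case: a => [[i j] p] /=. by rewrite /lit_sat /sucp. Qed.
Lemma count_neg s : count lpos (List.map (mkl false) s) = 0%nat.
Proof. elim: s => [|[[i j] p] s IH] //=. Qed.

Section Horn.
Variable n : nat.
Variable P : val_t -> Prop.
Variable M : Z.
Hypothesis HM : 0 <= M.
Hypothesis HD : Det P (iota 0 n) M.
Hypothesis HCl : Cl P.

Let L := atomsL n M.
Definition typ (v : val_t) := List.filter (holdsb v) L.

Lemma in_typ v a : List.In a (typ v) <-> List.In a L /\ holds v a.
Proof. rewrite /typ filter_In holdsbP. tauto. Qed.

Lemma comb_atoms u y N : 1 + M + 2 * sab u (iota 0 n) <= N ->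
  forall a, List.In a L -> (holds (comb u y N) a <-> holds u a /\ holds y a).
Proof.
move=> HN [[i j] p] Ha. have [Hi [Hj Hp]] := atomsL_inv Ha.
have := sab_ge (v:=u) Hi. have := sab_ge (v:=u) Hj. have := @sab_ge0 u (iota 0 n) => h0 h1 h2.
rewrite /holds. apply: inter; lia.
Qed.

Lemma clause_for (sg : list atom) : exists C : clause, (count lpos C <= 1)%nat /\
  (forall v, P v -> clause_sat v C) /\ (forall v, ~ P v -> typ v = sg -> ~ clause_sat v C).
Proof.
destruct (classic (exists x, ~ P x /\ typ x = sg)) as [[x [Hx Ex]]|Hnx]; last first.
{ exists [:: Lit true 0 0 0]; split => //; split.
  - move=> v _; exists (Lit true 0 0 0); [by left| rewrite /lit_sat /sucp /=; lia].
  - move=> v Hv Ev; exfalso; apply: Hnx; by exists v. }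
destruct (classic (exists y, P y /\ forall a, List.In a sg -> holds y a)) as [[y0 [Hy0 Sy0]]|Hny]; last first.
{ exists (List.map (mkl false) sg); split; first by rewrite count_neg.
  split.
  - move=> v Hv. destruct (classic (exists a, List.In a sg /\ ~ holds v a)) as [[a [Ha Hna]]|Hn].
    + exists (mkl false a); [exact: in_map| exact/mkl_false].
    + exfalso; apply: Hny; exists v; split => // a Ha.
      destruct (classic (holds v a)) => //. exfalso; apply: Hn; by exists a.
  - move=> v Hv Ev [l Hl Hs]. move: Hl; rewrite in_map_iff => [[a [Ea Ha]]]. subst l.
    move/mkl_false: Hs; apply. rewrite -Ev in Ha. by case/in_typ: Ha. }
destruct (classic (exists al, List.In al L /\ ~ holds x al /\
   forall y, P y -> (forall b, List.In b sg -> holds y b) -> holds y al)) as [[al [Hal [Hxal Hyal]]]|Hno].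
{ exists (mkl true al :: List.map (mkl false) sg); split; first by rewrite /= count_neg; case: al {Hal Hxal Hyal} => [[? ?] ?].
  split.
  - move=> v Hv. destruct (classic (forall b, List.In b sg -> holds v b)) as [Hall|Hn].
    + exists (mkl true al); [by left| exact/mkl_true/Hyal].
    + have [b [Hb Hnb]] : exists b, List.In b sg /\ ~ holds v b.
      { destruct (classic (exists b, List.In b sg /\ ~ holds v b)) => //. exfalso; apply: Hn => b Hb.
        destruct (classic (holds v b)) => //. exfalso; apply: H; by exists b. }
      exists (mkl false b); [right; exact: in_map| exact/mkl_false].
  - move=> v Hv Ev [l Hl Hs]. case: Hl => [El|Hl].
    + subst l. move/mkl_true: Hs => Hs. apply: Hxal.
      have : List.In al (typ v) by apply/in_typ.
      rewrite Ev -Ex. by case/in_typ.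
    + have Hl2 : List.In l (List.map (mkl false) sg) := Hl. move: Hl2; rewrite in_map_iff => [[a [Ea Ha]]]. subst l.
      move/mkl_false: Hs; apply. rewrite -Ev in Ha. by case/in_typ: Ha. }
exfalso.
have Hsg : forall b, List.In b sg <-> List.In b L /\ holds x b by move=> b; rewrite -Ex; exact: in_typ.
have Hy : forall al, List.In al L -> ~ holds x al ->
   exists y, P y /\ (forall b, List.In b sg -> holds y b) /\ ~ holds y al.
{ move=> al Hal Hxal. destruct (classic (exists y, P y /\ (forall b, List.In b sg -> holds y b) /\ ~ holds y al)) => //.
  exfalso; apply: Hno; exists al; split => //; split => // y Py Sy.
  destruct (classic (holds y al)) => //. exfalso; apply: H; exists y; tauto. }
have Hbuild : forall L', (forall al, List.In al L' -> List.In al L /\ ~ holds x al) ->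
   exists u, P u /\ (forall b, List.In b sg -> holds u b) /\ (forall al, List.In al L' -> ~ holds u al).
{ elim => [|al L' IH] HL'.
  - exists y0; split => //; split => //.
  - have [u [Pu [Su Nu]]] := IH (fun a Ha => HL' a (or_intror Ha)).
    have [Hal Hxal] := HL' al (or_introl erefl).
    have [y [Py [Sy Ny]]] := Hy al Hal Hxal.
    have [N [HN PN]] := HCl u y Pu Py (1 + M + 2 * sab u (iota 0 n)).
    exists (comb u y N); split => //; split.
    + move=> b Hb. have HbL := proj1 (proj1 (Hsg b) Hb).
      apply/(comb_atoms u y N HN b HbL). split; [exact: Su|exact: Sy].
    + move=> a [<-|Ha].
      * move/(comb_atoms u y N HN al Hal). tauto.
      * have HaL := proj1 (HL' a (or_intror Ha)). move/(comb_atoms u y N HN a HaL). have := Nu a Ha. tauto. }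
have [u [Pu [Su Nu]]] := Hbuild (List.filter (fun a => negb (holdsb x a)) L)
  ltac:(move=> al; rewrite filter_In; case=> H1 H2; split => //; move=> /holdsbP Hb; by rewrite Hb in H2).
apply: Hx. apply: (proj1 (HD u x _) Pu) => i j Hi Hj p Hp.
have HaL := atomsL_in HM Hi Hj Hp.
have E1 : holds u (i, j, p) <-> holds x (i, j, p).
{ split.
  - move=> Hu. destruct (classic (holds x (i,j,p))) as [|Hn] => //. exfalso.
    apply: (Nu (i,j,p)) => //. rewrite filter_In; split => //. apply/negP => /holdsbP. done.
  - move=> Hxx. apply: Su. apply/Hsg. by split. }
move: E1; rewrite /holds. lia.
Qed.

Lemma build_cnf (Sg : list (list atom)) : exists F, horn_cnf F /\ (forall v, P v -> cnf_sat v F) /\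
  (forall v, ~ P v -> List.In (typ v) Sg -> ~ cnf_sat v F).
Proof.
elim: Sg => [|sg Sg [F [HF [H1 H2]]]].
- exists nil; split; first by move=> c [].
  split; first by move=> v _ c []. by move=> v _ [].
- have [C [HC [HC1 HC2]]] := clause_for sg.
  exists (C :: F); split.
  + move=> c [<-|Hc] //. exact: HF.
  + split.
    * move=> v Hv c [<-|Hc]; [exact: HC1| exact: H1].
    * move=> v Hv [E|Hin] Hs.
      -- apply: (HC2 v Hv (esym E)). apply: Hs; by left.
      -- apply: (H2 v Hv Hin) => c Hc. apply: Hs; by right.
Qed.

Lemma horn_of : exists F, horn_cnf F /\ forall v, P v <-> cnf_sat v F.
Proof.
have [F [HF [H1 H2]]] := build_cnf (subl L).
exists F; split => // v; split; first exact: H1.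
move=> Hs. destruct (classic (P v)) as [|Hn] => //. exfalso.
apply: (H2 v Hn _ Hs). exact: filter_subl.
Qed.
End Horn.

Lemma horn_of_cl n (R : relation n) M : 0 <= M ->
  Det (fun v => R (fun k => v (nat_of_ord k))) (iota 0 n) M ->
  Cl (fun v => R (fun k => v (nat_of_ord k))) -> horn_definable R.
Proof.
move=> HM HD HC. have [F [HF H]] := @horn_of n _ M HM HD HC.
exists F; split => //.
Qed.


Lemma upd_same (P : val_t -> Prop) S v j : Supp P S -> (P (upd v j (v j)) <-> P v).
Proof. move=> HS; apply: HS => x _; rewrite /upd; case: eqP => [->|] //. Qed.

Lemma three_elems (S : seq nat) : uniq S -> (3 <= size S)%nat ->
  exists j1 j2 j3, j1 \in S /\ j2 \in S /\ j3 \in S /\ j1 <> j2 /\ j1 <> j3 /\ j2 <> j3.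
Proof.
case: S => [|s1 [|s2 [|s3 S]]] //= /andP [H1 /andP [H2 _]] _.
exists s1, s2, s3. rewrite !inE !eqxx !orbT /=. do 3 (split; first by []).
move: H1 H2; rewrite !inE !negb_or => /andP [/eqP h1 /andP [/eqP h2 _]] /andP [/eqP h3 _].
split; [exact: h1| split; [exact: h2| exact: h3]].
Qed.

Arguments three_elems {S}.

Lemma two_others (S : seq nat) : uniq S -> (3 <= size S)%nat -> forall m,
  exists al be, al \in S /\ be \in S /\ al <> be /\ al <> m /\ be <> m.
Proof.
move=> HU H3 m. have [j1 [j2 [j3 [H1 [H2 [H3' [E12 [E13 E23]]]]]]]] := three_elems HU H3.
case: (Nat.eq_dec j1 m) => [<-|N1].
- exists j2, j3; do 3 (split => //). split; auto.
- case: (Nat.eq_dec j2 m) => [<-|N2].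
  + exists j1, j3; do 3 (split => //). split; auto.
  + exists j1, j2; do 3 (split => //).
Qed.

Arguments two_others {S}.

Section Key.
Variable P : val_t -> Prop.
Variable S : seq nat.
Variable M : Z.
Hypothesis HM : 0 <= M.
Hypothesis HU : uniq S.
Hypothesis HS3 : (3 <= size S)%nat.
Hypothesis HSu : Supp P S.
Hypothesis HD : Det P S M.
Hypothesis Hres : forall i j d, i \in S -> j \in S -> i <> j -> Cl (fun v => P (upd v j (v i + d))).
Hypothesis Hproj : forall j, j \in S -> Cl (fun v => exists z, P (upd v j z)).

Definition Spread (k : Z) (c : val_t) := forall x y, x \in S -> y \in S -> x <> y -> k < Z.abs (c y - c x).

Definition NP (c : val_t) i j d := i \in S /\ j \in S /\ i <> j /\ c j - c i = d /\ Z.abs d <= M /\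
  forall x y, x \in S -> y \in S -> x <> y -> ~ ((x = i /\ y = j) \/ (x = j /\ y = i)) -> M < Z.abs (c y - c x).

Lemma spread_sim c c' : Spread M c -> Spread M c' -> sim M S c c'.
Proof.
move=> H1 H2 x y Hx Hy p Hp. case: (Nat.eq_dec x y) => [->|Hxy]; first lia.
have := H1 x y Hx Hy Hxy. have := H2 x y Hx Hy Hxy. lia.
Qed.

Lemma np_sim c c' i j d : NP c i j d -> NP c' i j d -> sim M S c c'.
Proof.
move=> [Hi [Hj [Hij [E1 [Hd H1]]]]] [_ [_ [_ [E2 [_ H2]]]]] x y Hx Hy p Hp.
case: (Nat.eq_dec x y) => [->|Hxy]; first lia.
destruct (classic ((x = i /\ y = j) \/ (x = j /\ y = i))) as [[[-> ->]|[-> ->]]|Hn].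
- lia.
- lia.
- have := H1 x y Hx Hy Hxy Hn. have := H2 x y Hx Hy Hxy Hn. lia.
Qed.

Lemma np_sym c i j d : NP c i j d -> NP c j i (- d).
Proof.
move=> [Hi [Hj [Hij [E1 [Hd H1]]]]]. do 3 (split; first by auto). split; first lia. split; first lia.
move=> x y Hx Hy Hxy Hn. apply: H1 => //. tauto.
Qed.

Definition B (x : nat) : Z := (2 * M + 1) * Z.of_nat x.

Lemma realize i j d : i \in S -> j \in S -> i <> j -> Z.abs d <= M -> NP (upd B j (B i + d)) i j d.
Proof.
move=> Hi Hj Hij Hd. have h1 : (i == j) = false by apply/eqP.
do 3 (split; first by auto). split; first by rewrite /upd eqxx h1; lia.
split => // x y Hx Hy Hxy Hn. rewrite /upd /B.
case: (eqVneq x j) => [Exj|Hxj]; case: (eqVneq y j) => [Eyj|Hyj].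
- exfalso; apply: Hxy; by rewrite Exj Eyj.
- have Hyi : y <> i by move=> E; apply: Hn; right; split; [exact: Exj|exact: E].
  have : Z.of_nat y <> Z.of_nat i by lia.
  move=> Hne. have : Z.of_nat y - Z.of_nat i >= 1 \/ Z.of_nat y - Z.of_nat i <= -1 by lia.
  case=> H; nia.
- have Hxi : x <> i by move=> E; apply: Hn; left; split; [exact: E|exact: Eyj].
  have : Z.of_nat i - Z.of_nat x >= 1 \/ Z.of_nat i - Z.of_nat x <= -1 by lia.
  case=> H; nia.
- have : Z.of_nat y - Z.of_nat x >= 1 \/ Z.of_nat y - Z.of_nat x <= -1 by lia.
  case=> H; nia.
Qed.

Lemma spread_P a b : (exists u, P u /\ Spread M u) ->
  (forall x y, x \in S -> y \in S -> x <> y -> b y - a y <> b x - a x) ->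
  forall N0, exists N, N0 <= N /\ P (comb a b N).
Proof.
move=> [u [Pu Su]] Hinj N0.
exists (Z.max N0 (M + 1 + 2 * sab a S)); split; first lia.
apply: (proj1 (HD u _ _) Pu). apply: spread_sim => // x y Hx Hy Hxy.
have := sab_ge (v:=a) Hx. have := sab_ge (v:=a) Hy. have := @sab_ge0 a S => h0 h1 h2.
have := gap (a y - a x) (b y - b x) (Z.max N0 (M + 1 + 2 * sab a S)) ltac:(have := Hinj x y Hx Hy Hxy; lia) ltac:(lia).
rewrite /comb. 
have -> : a y + Z.max N0 (M + 1 + 2 * sab a S) * (b y - a y) - (a x + Z.max N0 (M + 1 + 2 * sab a S) * (b x - a x)) =
  a y - a x + Z.max N0 (M + 1 + 2 * sab a S) * (b y - b x - (a y - a x)) by ring.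
lia.
Qed.

Lemma np_near c i j d x y : NP c i j d -> x \in S -> y \in S -> x <> y -> Z.abs (c y - c x) <= M ->
  (x = i /\ y = j) \/ (x = j /\ y = i).
Proof.
move=> [_ [_ [_ [_ [_ H]]]]] Hx Hy Hxy Hle.
destruct (classic ((x = i /\ y = j) \/ (x = j /\ y = i))) as [|Hn] => //.
have := H x y Hx Hy Hxy Hn. lia.
Qed.

Lemma two_np c1 c2 i1 m d1 i2 m' d2 al be :
  P c1 -> NP c1 i1 m d1 -> P c2 -> NP c2 i2 m' d2 ->
  ~ ((i1 = i2 /\ m = m') \/ (i1 = m' /\ m = i2)) ->
  al \in S -> be \in S -> al <> be -> al <> m -> be <> m -> al <> m' -> be <> m' ->
  exists u, P u /\ Spread M u.
Proof.
move=> P1 N1 P2 N2 Hud Hal Hbe Hab Ham Hbm Ham' Hbm'.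
have N1' := N1. have N2' := N2.
case: N1' => [Hi1 [Hm1 [Him1 [_ [Hd1 _]]]]]. case: N2' => [Hi2 [Hm2 [Him2 [_ [Hd2 _]]]]].
set p' := upd B m (B i1 + d1). set q' := upd B m' (B i2 + d2).
have Np : NP p' i1 m d1 by exact: realize.
have Nq : NP q' i2 m' d2 by exact: realize.
have Pp : P p' := proj1 (HD c1 p' (@np_sim c1 p' i1 m d1 N1 Np)) P1.
have Pq : P q' := proj1 (HD c2 q' (@np_sim c2 q' i2 m' d2 N2 Nq)) P2.
set d0 := B be - B al.
have Ep : p' be - p' al = d0 by rewrite /p' !upd_neq.
have Eq : q' be - q' al = d0 by rewrite /q' !upd_neq.
have Hcl := Hres al be d0 Hal Hbe Hab.
have Pp2 : P (upd p' be (p' al + d0)).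
{ have -> : p' al + d0 = p' be by lia. exact/(@upd_same P S p' be HSu). }
have Pq2 : P (upd q' be (q' al + d0)).
{ have -> : q' al + d0 = q' be by lia. exact/(@upd_same P S q' be HSu). }
have [N [HN PN]] := Hcl p' q' Pp2 Pq2 (M + 1 + 2 * sab p' S).
set w := comb p' q' N in PN *.
have Pw : P w.
{ move: PN.
  have Ew0 : w be - w al = (p' be - p' al) + N * ((q' be - q' al) - (p' be - p' al)) by rewrite /w /comb; ring.
  rewrite Ep Eq Z.sub_diag Z.mul_0_r Z.add_0_r in Ew0.
  have -> : w al + d0 = w be by lia. move/(@upd_same P S w be HSu). done. }
exists w; split => // x y Hx Hy Hxy.
have := sab_ge (v:=p') Hx. have := sab_ge (v:=p') Hy. have := @sab_ge0 p' S => h0 h1 h2.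
have Ew : w y - w x = (p' y - p' x) + N * ((q' y - q' x) - (p' y - p' x)) by rewrite /w /comb; ring.
case: (Z.eq_dec (q' y - q' x) (p' y - p' x)) => Hd.
- rewrite Ew Hd. have -> : p' y - p' x + N * (p' y - p' x - (p' y - p' x)) = p' y - p' x by ring.
  destruct (Z_lt_le_dec M (Z.abs (p' y - p' x))) as [|Hle] => //. exfalso.
  have A1 := @np_near p' i1 m d1 x y Np Hx Hy Hxy Hle.
  have A2 := @np_near q' i2 m' d2 x y Nq Hx Hy Hxy ltac:(rewrite Hd; exact: Hle).
  apply: Hud. case: A1 => [[E1 E2]|[E1 E2]]; case: A2 => [[E3 E4]|[E3 E4]]; subst; tauto.
- have HN0 : 0 <= N by clear -HN h0 HM; lia. have G0 := gap (p' y - p' x) (q' y - q' x) N (not_eq_sym Hd) HN0. rewrite Ew. have Hb : Z.abs (p' y - p' x) <= 2 * sab p' S by clear -h1 h2; lia. clear -G0 Hb HN. lia.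
Qed.


Lemma combine c1 i1 j1 d1 c2 i2 j2 d2 : P c1 -> NP c1 i1 j1 d1 -> P c2 -> NP c2 i2 j2 d2 ->
  ~ ((i1 = i2 /\ j1 = j2) \/ (i1 = j2 /\ j1 = i2)) -> exists u, P u /\ Spread M u.
Proof.
move=> P1 N1 P2 N2 Hud.
have N1' := N1. have N2' := N2.
case: N1' => [Hi1 [Hj1 [Hij1 _]]]. case: N2' => [Hi2 [Hj2 [Hij2 _]]].
have F1 := @np_sym c1 i1 j1 d1 N1. have F2 := @np_sym c2 i2 j2 d2 N2.
case: (Nat.eq_dec j1 j2) => [E|Ejj].
{ have [al [be [Ha [Hb [Hab [Ham Hbm]]]]]] := two_others HU HS3 j1.
  apply: (@two_np c1 c2 i1 j1 d1 i2 j2 d2 al be P1 N1 P2 N2 _ Ha Hb Hab Ham Hbm); [tauto|by rewrite -E|by rewrite -E]. }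
case: (Nat.eq_dec j1 i2) => [E|Eji].
{ have [al [be [Ha [Hb [Hab [Ham Hbm]]]]]] := two_others HU HS3 j1.
  apply: (@two_np c1 c2 i1 j1 d1 j2 i2 (-d2) al be P1 N1 P2 F2 _ Ha Hb Hab Ham Hbm); [tauto|by rewrite -E|by rewrite -E]. }
case: (Nat.eq_dec i1 j2) => [E|Eij].
{ have [al [be [Ha [Hb [Hab [Ham Hbm]]]]]] := two_others HU HS3 i1.
  apply: (@two_np c1 c2 j1 i1 (-d1) i2 j2 d2 al be P1 F1 P2 N2 _ Ha Hb Hab Ham Hbm); [tauto|by rewrite -E|by rewrite -E]. }
case: (Nat.eq_dec i1 i2) => [E|Eii].
{ have [al [be [Ha [Hb [Hab [Ham Hbm]]]]]] := two_others HU HS3 i1.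
  apply: (@two_np c1 c2 j1 i1 (-d1) j2 i2 (-d2) al be P1 F1 P2 F2 _ Ha Hb Hab Ham Hbm); [tauto|by rewrite -E|by rewrite -E]. }
apply: (@two_np c1 c2 i1 j1 d1 i2 j2 d2 i1 i2 P1 N1 P2 N2 _ Hi1 Hi2 Eii Hij1 _ Eij _); [tauto| auto | auto].
Qed.

Lemma proj_point a b j : P a -> P b ->
  (forall x y, x \in S -> y \in S -> x <> y -> b y - a y <> b x - a x) -> j \in S ->
  (exists u, P u /\ Spread M u) \/ (exists c i d, P c /\ NP c i j d).
Proof.
move=> Pa Pb Hinj Hj.
have Qa : exists z, P (upd a j z) by exists (a j); exact/(@upd_same P S a j HSu).
have Qb : exists z, P (upd b j z) by exists (b j); exact/(@upd_same P S b j HSu).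
have [N [HN [z Pz]]] := Hproj j Hj a b Qa Qb (2 * M + 1 + 2 * sab a S).
set A := comb a b N in Pz.
have SA : forall x y, x \in S -> y \in S -> x <> y -> 2 * M < Z.abs (A y - A x).
{ move=> x y Hx Hy Hxy.
  have := sab_ge (v:=a) Hx. have := sab_ge (v:=a) Hy. have := @sab_ge0 a S => h0 h1 h2.
  have Ew : A y - A x = (a y - a x) + N * ((b y - b x) - (a y - a x)) by rewrite /A /comb; ring.
  have Hne : a y - a x <> b y - b x by have := Hinj x y Hx Hy Hxy; lia.
  have HN0 : 0 <= N by clear -HN h0 HM; lia.
  have G0 := gap _ _ _ Hne HN0. rewrite Ew.
  have Hb : Z.abs (a y - a x) <= 2 * sab a S by clear -h1 h2; lia.
  clear -G0 Hb HN. lia. }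
set c := upd A j z in Pz.
destruct (classic (Spread M c)) as [Sc|NSc]; first by left; exists c.
right.
have [x [y [Hx [Hy [Hxy Hle]]]]] : exists x y, x \in S /\ y \in S /\ x <> y /\ Z.abs (c y - c x) <= M.
{ destruct (classic (exists x y, x \in S /\ y \in S /\ x <> y /\ Z.abs (c y - c x) <= M)) as [|Hn] => //.
  exfalso; apply: NSc => x y Hx Hy Hxy.
  destruct (Z_lt_le_dec M (Z.abs (c y - c x))) as [|Hle] => //. exfalso; apply: Hn. by exists x, y. }
have cA : forall k, k <> j -> c k = A k by move=> k Hk; rewrite /c upd_neq.
have cj : c j = z by rewrite /c upd_eq.
have [i [Hi [Hij Hnear]]] : exists i, i \in S /\ i <> j /\ Z.abs (z - A i) <= M.
{ case: (Nat.eq_dec x j) => [Ex|Nx]; case: (Nat.eq_dec y j) => [Ey|Ny].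
  - exfalso; apply: Hxy; by rewrite Ex Ey.
  - exists y; split => //; split => //. move: Hle; rewrite Ex cj (cA y Ny). lia.
  - exists x; split => //; split => //. move: Hle; rewrite Ey cj (cA x Nx). lia.
  - exfalso. have := SA x y Hx Hy Hxy. move: Hle; rewrite (cA x Nx) (cA y Ny). lia. }
exists c, i, (z - A i); split => //.
split => //; split => //; split => //. split; first by rewrite cj cA.
split => // x' y' Hx' Hy' Hxy' Hn.
case: (Nat.eq_dec x' j) => [Ex|Nx]; case: (Nat.eq_dec y' j) => [Ey|Ny].
- exfalso; apply: Hxy'; by rewrite Ex Ey.
- have Nyi : y' <> i by move=> E; apply: Hn; right; split.
  rewrite Ex cj (cA y' Ny). have := SA i y' Hi Hy' (not_eq_sym Nyi). clear -Hnear HM. lia.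
- have Nxi : x' <> i by move=> E; apply: Hn; left; split.
  rewrite Ey cj (cA x' Nx). have := SA i x' Hi Hx' (not_eq_sym Nxi). clear -Hnear HM. lia.
- rewrite (cA x' Nx) (cA y' Ny). have := SA x' y' Hx' Hy' Hxy'. clear -HM. lia.
Qed.

Lemma key : Cl P.
Proof.
move=> a b Pa Pb N0.
destruct (classic (exists x y, x \in S /\ y \in S /\ x <> y /\ b y - a y = b x - a x)) as [[x [y [Hx [Hy [Hxy E]]]]]|Hinj].
- have Hcl := Hres x y (a y - a x) Hx Hy Hxy.
  have Pa2 : P (upd a y (a x + (a y - a x))).
  { have -> : a x + (a y - a x) = a y by ring. exact/(@upd_same P S a y HSu). }
  have Pb2 : P (upd b y (b x + (a y - a x))).
  { have -> : b x + (a y - a x) = b y by lia. exact/(@upd_same P S b y HSu). }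
  have [N [HN PN]] := Hcl a b Pa2 Pb2 N0.
  exists N; split => //. move: PN.
  have Ew : comb a b N y - comb a b N x = (a y - a x) + N * ((b y - a y) - (b x - a x)) by rewrite /comb; ring.
  rewrite E Z.sub_diag Z.mul_0_r Z.add_0_r in Ew.
  have -> : comb a b N x + (a y - a x) = comb a b N y by lia.
  move/(@upd_same P S (comb a b N) y HSu). done.
- have Hi : forall x y, x \in S -> y \in S -> x <> y -> b y - a y <> b x - a x.
  { move=> x y Hx Hy Hxy E. apply: Hinj. by exists x, y. }
  apply: spread_P => //.
  have [j1 [j2 [j3 [H1 [H2 [H3 [E12 [E13 E23]]]]]]]] := three_elems HU HS3.
  case: (proj_point a b j1 Pa Pb Hi H1) => [//|[c1 [i1 [d1 [P1 N1]]]]].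
  case: (proj_point a b j2 Pa Pb Hi H2) => [//|[c2 [i2 [d2 [P2 N2]]]]].
  case: (proj_point a b j3 Pa Pb Hi H3) => [//|[c3 [i3 [d3 [P3 N3]]]]].
  destruct (classic ((i1 = i2 /\ j1 = j2) \/ (i1 = j2 /\ j1 = i2))) as [Hc|Hud].
  + apply: (@combine c1 i1 j1 d1 c3 i3 j3 d3 P1 N1 P3 N3). case: Hc => [[_ E]|[E1 E2]]; first by exfalso.
    move=> [[_ E]|[E3 E4]]; first by apply: E13. apply: E23; by rewrite -E1.
  + exact: (@combine c1 i1 j1 d1 c2 i2 j2 d2 P1 N1 P2 N2).
Qed.

End Key.


Lemma small_eq (S : seq nat) i j : (size S < 2)%nat -> i \in S -> j \in S -> i = j.
Proof. case: S => [|s1 [|s2 S']] //= _; rewrite !inE => /eqP -> /eqP -> //. Qed.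

Section Main.
Variable G : structure.
Hypothesis Hfo : forall s : sym G, fo_definable (@interp G s).
Hypothesis Hsuc : pp_definable G suc_rel.

Lemma notCl (P : val_t -> Prop) : ~ Cl P ->
  exists a b N0, P a /\ P b /\ forall N, N0 <= N -> ~ P (comb a b N).
Proof.
move=> H. apply: NNPP => Hn. apply: H => a b Pa Pb N0.
apply: NNPP => Hn2. apply: Hn. exists a, b, N0; split => //; split => // N HN PN.
apply: Hn2; by exists N.
Qed.

Lemma base2 (P : val_t -> Prop) al be : al <> be -> PPdef G P -> Supp P [:: al; be] -> ~ Cl P ->
  exists R2 : relation 2, pp_definable G R2 /\ ~ horn_definable R2.
Proof.
move=> Hab HP HS HnC.
have HS2 : forall v w, v al = w al -> v be = w be -> (P v <-> P w).
{ move=> v w E1 E2; apply: HS => x; rewrite !inE => /orP [/eqP ->|/eqP ->] //. }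
have Hal : forall x y, ren al be x y al = x by move=> x y; rewrite /ren eqxx.
have Hbe : forall x y, ren al be x y be = y.
{ move=> x y; rewrite /ren. have -> : (be == al) = false by apply/eqP; auto. by rewrite eqxx. }
exists (fun t => P (ren al be (t ord0) (t (@Ordinal 2 1 isT)))). split.
- have [f Hf] := @pp_rename2 G P al be HP HS2 Hab 0%nat 1%nat.
  exists f => v. exact: Hf.
- move=> [F [HF HFe]].
  have [a [b [N0 [Pa [Pb Hno]]]]] := notCl P HnC.
  set Va := ren 0%nat 1%nat (a al) (a be). set Vb := ren 0%nat 1%nat (b al) (b be).
  have Sa : cnf_sat Va F.
  { apply/HFe. move: Pa; apply: (fun E1 E2 => proj1 (HS2 _ _ E1 E2)); rewrite ?Hal ?Hbe /Va /ren //=. }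
  have Sb : cnf_sat Vb F.
  { apply/HFe. move: Pb; apply: (fun E1 E2 => proj1 (HS2 _ _ E1 E2)); rewrite ?Hal ?Hbe /Vb /ren //=. }
  have [N1 HN1] := cnf_comb F HF Va Vb Sa Sb.
  apply: (Hno (Z.max N0 N1)); first lia.
  have := HN1 (Z.max N0 N1) ltac:(lia). move/HFe => /=.
  apply: (fun E1 E2 => proj1 (HS2 _ _ E1 E2)); rewrite ?Hal ?Hbe /comb /Va /Vb /ren /=; by [].
Qed.

Lemma main_ind : forall n (P : val_t -> Prop) (S : seq nat), size S = n -> uniq S ->
  PPdef G P -> Supp P S -> ~ Cl P ->
  exists R2 : relation 2, pp_definable G R2 /\ ~ horn_definable R2.
Proof.
intro n; induction n as [n IH] using lt_wf_ind => P S HsS HU HP HS HnC.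
have [M [HM HD]] := @det_of_pp G P _ Hfo HP HS.
case: (ltnP n 2) => Hn.
{ exfalso; apply: HnC => a b Pa Pb N0. exists N0; split; first lia.
  apply: (proj1 (HD a _ _) Pa) => i j Hi Hj p Hp.
  have Eij : i = j by apply: (small_eq S) => //; rewrite HsS.
  subst j. rewrite !Z.sub_diag. lia. }
case: (ltnP n 3) => Hn3.
{ have E2 : n = 2%nat by lia. rewrite E2 in HsS.
  move: HsS HU HS; case: S {HD} => [|al [|be [|? ?]]] //= _.
  rewrite inE andbT => Hab HS. apply: (base2 P al be) => //. by move=> E; rewrite E eqxx in Hab. }
destruct (classic (forall i j d, i \in S -> j \in S -> i <> j -> Cl (fun v => P (upd v j (v i + d))))) as [Hr|Hr];
  last first.
{ have [i [j [d [Hi [Hj [Hij HnC']]]]]] : exists i j d, i \in S /\ j \in S /\ i <> j /\ ~ Cl (fun v => P (upd v j (v i + d))).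
  { apply: NNPP => H. apply: Hr => i j d Hi Hj Hij. apply: NNPP => H2. apply: H. by exists i, j, d. }
  apply: (IH (size (rem j S)) _ _ (rem j S)) => //.
  - rewrite size_rem // HsS. apply/ltP. lia.
  - exact: rem_uniq.
  - exact: (@pp_restr G Hsuc P i j d HP Hij).
  - move=> v w Hvw. apply: HS => x Hx.
    have Hi' : i \in rem j S by rewrite (mem_rem_uniq _ HU) inE Hi andbT; apply/eqP.
    rewrite /upd. case: eqP => [_|Hxj]; first by rewrite (Hvw i Hi').
    apply: Hvw. rewrite (mem_rem_uniq _ HU) inE Hx andbT. by apply/eqP.
  - exact: HnC'. }
destruct (classic (forall j, j \in S -> Cl (fun v => exists z, P (upd v j z)))) as [Hp|Hp]; last first.
{ have [j [Hj HnC']] : exists j, j \in S /\ ~ Cl (fun v => exists z, P (upd v j z)).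
  { apply: NNPP => H. apply: Hp => j Hj. apply: NNPP => H2. apply: H. by exists j. }
  apply: (IH (size (rem j S)) _ _ (rem j S)) => //.
  - rewrite size_rem // HsS. apply/ltP. lia.
  - exact: rem_uniq.
  - exact: (@pp_ex G _ j HP).
  - move=> v w Hvw.
    have E : forall z, P (upd v j z) <-> P (upd w j z).
    { move=> z; apply: HS => x Hx. rewrite /upd. case: eqP => [_|Hxj] //.
      apply: Hvw. rewrite (mem_rem_uniq _ HU) inE Hx andbT. by apply/eqP. }
    split => [[z Hz]|[z Hz]]; exists z; by apply/E.
  - exact: HnC'. }
exfalso; apply: HnC. apply: (@key P S M HM HU _ HS HD Hr Hp). by rewrite HsS.
Qed.
End Main.

Local Close Scope Z_scope.

Theorem mainTheorem17 (G : structure) :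
  fo_expansion G ->
  (exists (n : nat) (R : relation n), pp_definable G R /\ ~ horn_definable R) ->
  exists R2 : relation 2, pp_definable G R2 /\ ~ horn_definable R2.
Proof.
move=> [Hfo Hsuc] [n [R [Hpp Hnh]]].
set P := fun v : val_t => R (fun k : 'I_n => v (nat_of_ord k)).
have HP : PPdef G P by exact: Hpp.
have HS : Supp P (iota 0 n).
{ move=> v w H; rewrite /P.
  have -> : (fun k : 'I_n => v (nat_of_ord k)) = (fun k => w (nat_of_ord k)); last by [].
  apply: functional_extensionality => k; apply: H; rewrite mem_iota /=; exact: ltn_ord. }
apply: (@main_ind G Hfo Hsuc (size (iota 0 n)) P (iota 0 n) erefl (iota_uniq 0 n) HP HS).
move=> HC. have [M [HM HD]] := @det_of_pp G P _ Hfo HP HS.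
apply: Hnh. exact: (@horn_of_cl n R M HM HD HC).
Qed.
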